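(* Fix $k\in\mathbb{Z}_{\ge0}$. Let $S$ be a ubiquitously dense subset of $[0,\infty)$ and $R=(r_i)_{i\in\mathbb{Z}_{\ge0}}$ an $S$-gauge system on $\Omega$. Then: (1) $\Lambda^k[R]\in\mathrm{Met}(N(\Omega))$; (2) the diameter of $N(\Omega)$ with respect to $\Lambda^k[R]$ is at most $2\cdot2^{-F_k(0)}=2^{-k}$; (3) the metric $\Lambda^k[R]$ is complete.
   Context: A subset $S$ of $[0,\infty)$ is ubiquitously dense if $\operatorname{card}(U\cap S)=\operatorname{card}(S)$ for every non-empty open $U\subseteq[0,\infty)$. Fix a bijection $Q\colon\mathbb{Z}_{\ge0}\to\mathbb{Q}_{\ge0}$ with property (M): setting $\mu_m=\min Q^{-1}([m,m+1)\cap\mathbb{Q})$, we have $Q(\mu_m)=m$ and $\mu_m<\mu_{m+1}$ for all $m$. For a summable sequence $\alpha=(a_i)$ of positive reals and $B\subseteq\mathbb{Q}_{\ge0}$, $\langle\alpha,B\rangle=\sum_{i:\,Q(i)\in B}a_i$ ($=0$ if $B=\emptyset$). For $k\in\mathbb{Z}_{\ge0}$ let $F_k(n)=2^n+k$ and $\lambda^k_i=2^{-F_k(i)}$, $\lambda^k=(\lambda^k_i)_{i\ge0}$. $\Omega$ is a discrete space of cardinality $\mathfrak{c}$ and $N(\Omega)=\Omega^{\mathbb{Z}_{\ge0}}$ with the product topology. For $T\subseteq[0,\infty)$, a $T$-semi-metric on a set $Y$ is a symmetric map $r\colon Y\times Y\to[0,\infty)$ with $r(x,y)=0$ iff $x=y$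 and $r(x,y)\in T$ for $x\ne y$; it is strongly rigid if $r(x,y)=r(u,v)\neq0$ implies $\{x,y\}=\{u,v\}$. For dense $S\subseteq[0,\infty)$, an $S$-gauge system on $\Omega$ is a sequence $(r_i)_{i\ge0}$ with each $r_i$ a strongly rigid $(S\cap(i,i+1))$-semi-metric on $\Omega$. Put $J(m,t)=[m,t)\cap\mathbb{Q}$, $\Lambda^k_m[r](a,b)=\langle\lambda^k,J(m,r(a,b))\rangle$ for $a,b\in\Omega$, and for $x=(x_i),y=(y_i)\in N(\Omega)$, $\Lambda^k[R](x,y)=\sum_{m\ge0}\Lambda^k_m[r_m](x_m,y_m)=\langle\lambda^k,\bigsqcup_{m\ge0}J(m,r_m(x_m,y_m))\rangle$. $\mathrm{Met}(Y)$ is the set of metrics on $Y$ generating its topology. *)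

(* Defs.v *)
From Stdlib Require Import Reals Lra QArith Qreals ClassicalEpsilon List.
From Coquelicot Require Import Coquelicot.
Open Scope R_scope.

Definition is_rat (x : R) : Prop := exists q : Q, Q2R q = x.

Definition rat_enum (Qe : nat -> R) : Prop :=
  (forall i j, Qe i = Qe j -> i = j) /\
  (forall x, (is_rat x /\ 0 <= x) <-> exists i, Qe i = x).

Definition is_mu (Qe : nat -> R) (m i : nat) : Prop :=
  (INR m <= Qe i < INR m + 1) /\
  (forall j, INR m <= Qe j < INR m + 1 -> (i <= j)%nat).

Definition property_M (Qe : nat -> R) : Prop :=
  (forall m i, is_mu Qe m i -> Qe i = INR m) /\
  (forall m i i', is_mu Qe m i -> is_mu Qe (S m) i' -> (i < i')%nat).

Definition pair_sum (Qe : nat -> R) (a : nat -> R) (B : R -> Prop) : R :=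
  Series (fun i => if excluded_middle_informative (B (Qe i)) then a i else 0).

Definition Fk (k n : nat) : nat := (2 ^ n + k)%nat.
Definition lam (k i : nat) : R := / 2 ^ (Fk k i).

Definition J (m : nat) (t : R) : R -> Prop := fun q => is_rat q /\ INR m <= q < t.

Definition Lambda_m {Om : Type} (Qe : nat -> R) (k m : nat)
  (r : Om -> Om -> R) (a b : Om) : R :=
  pair_sum Qe (lam k) (J m (r a b)).

Definition Lambda {Om : Type} (Qe : nat -> R) (k : nat)
  (Rs : nat -> Om -> Om -> R) (x y : nat -> Om) : R :=
  Series (fun m => Lambda_m Qe k m (Rs m) (x m) (y m)).

Definition open_nonneg (U : R -> Prop) : Prop :=
  (forall x, U x -> 0 <= x) /\
  (forall x, U x -> exists eps, 0 < eps /\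
      forall y, 0 <= y -> Rabs (y - x) < eps -> U y).

Definition same_card {A : Type} (P P' : A -> Prop) : Prop :=
  exists (f : {x | P x} -> {x | P' x}) (g : {x | P' x} -> {x | P x}),
    (forall u, g (f u) = u) /\ (forall v, f (g v) = v).

Definition ubiq_dense (S : R -> Prop) : Prop :=
  (forall x, S x -> 0 <= x) /\
  (forall U, open_nonneg U -> (exists x, U x) ->
     same_card (fun x => U x /\ S x) S).

Definition dense_nonneg (S : R -> Prop) : Prop :=
  (forall x, S x -> 0 <= x) /\
  (forall U, open_nonneg U -> (exists x, U x) -> exists x, U x /\ S x).

Definition semi_metric {Y : Type} (T : R -> Prop) (r : Y -> Y -> R) : Prop :=
  (forall x y, 0 <= r x y) /\
  (forall x y, r x y = r y x) /\
  (forall x y, r x y = 0 <-> x = y) /\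
  (forall x y, x <> y -> T (r x y)).

Definition strongly_rigid {Y : Type} (r : Y -> Y -> R) : Prop :=
  forall x y u v, r x y = r u v -> r x y <> 0 ->
    (x = u /\ y = v) \/ (x = v /\ y = u).

Definition gauge_system {Om : Type} (S : R -> Prop) (Rs : nat -> Om -> Om -> R) : Prop :=
  dense_nonneg S /\
  forall i : nat,
    semi_metric (fun t => S t /\ INR i < t < INR i + 1) (Rs i) /\
    strongly_rigid (Rs i).

Definition card_continuum (Om : Type) : Prop :=
  exists (f : Om -> R) (g : R -> Om),
    (forall x, g (f x) = x) /\ (forall y, f (g y) = y).

(* open sets of the product topology: unions of basic cylinders
   {y | forall i in F, y i in V i}, F finite; every V i is open (Omega discrete) *)
Definition prod_open {Om : Type} (U : (nat -> Om) -> Prop) : Prop :=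
  forall x, U x -> exists (F : list nat) (V : nat -> Om -> Prop),
    (forall i, In i F -> V i (x i)) /\
    (forall y, (forall i, In i F -> V i (y i)) -> U y).

Definition is_metric {Y : Type} (d : Y -> Y -> R) : Prop :=
  (forall x y, 0 <= d x y) /\
  (forall x y, d x y = 0 <-> x = y) /\
  (forall x y, d x y = d y x) /\
  (forall x y z, d x z <= d x y + d y z).

Definition metric_open {Y : Type} (d : Y -> Y -> R) (U : Y -> Prop) : Prop :=
  forall x, U x -> exists eps, 0 < eps /\ forall y, d x y < eps -> U y.

Definition in_Met {Om : Type} (d : (nat -> Om) -> (nat -> Om) -> R) : Prop :=
  is_metric d /\ (forall U, prod_open U <-> metric_open d U).

Definition complete_metric {Y : Type} (d : Y -> Y -> R) : Prop :=
  forall u : nat -> Y,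
    (forall eps, 0 < eps -> exists N, forall n m, (N <= n)%nat -> (N <= m)%nat ->
        d (u n) (u m) < eps) ->
    exists l, forall eps, 0 < eps -> exists N, forall n, (N <= n)%nat -> d (u n) l < eps.

(* Main.v *)
Require Import Defs.
From Stdlib Require Import Reals Lra Lia List QArith Qreals Classical ClassicalEpsilon FunctionalExtensionality.
From Coquelicot Require Import Coquelicot.
Open Scope R_scope.

Lemma ser_part (a : nat -> R) N : ex_series a -> (forall n, 0 <= a n) -> sum_f_R0 a N <= Series a.
Proof. intros He Hp. apply sum_incr; auto. apply is_series_Reals. apply Series_correct; auto. Qed.

Lemma ser_term (a : nat -> R) n : ex_series a -> (forall n, 0 <= a n) -> a n <= Series a.
Proof. intros He Hp. eapply Rle_trans; [|apply (ser_part a n); auto].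
  destruct n; simpl; [lra|]. pose proof (cond_pos_sum a n Hp). lra. Qed.

Lemma ser_nonneg (a : nat -> R) : ex_series a -> (forall n, 0 <= a n) -> 0 <= Series a.
Proof. intros He Hp. eapply Rle_trans; [apply (Hp 0%nat)|]. apply ser_term; auto. Qed.

Lemma ser_zero : Series (fun _ => 0) = 0.
Proof. rewrite (Series_ext _ (fun n => 0 * 1)); [|intros; ring]. rewrite Series_scal_l. ring. Qed.

Lemma ser_bound (a : nat -> R) B : ex_series a -> (forall N, sum_f_R0 a N <= B) -> Series a <= B.
Proof. intros He Hb. destruct (Rle_or_lt (Series a) B) as [h|h]; auto.
  pose proof (proj1 (is_series_Reals _ _) (Series_correct _ He)) as Hc.
  destruct (Hc (Series a - B)) as [N HN]; [lra|].
  specialize (HN N (le_n _)). specialize (Hb N). unfold Rdist in HN.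
  apply Rabs_def2 in HN. lra. Qed.

Lemma ser_cmp (a b : nat -> R) : (forall n, 0 <= a n <= b n) -> ex_series b -> ex_series a.
Proof. intros H Hb. apply (ex_series_le a b); auto. intros n. unfold norm; simpl. unfold abs; simpl. rewrite Rabs_pos_eq; apply H. Qed.

Lemma geo_is c : is_series (fun n => c * (/2)^n) (2*c).
Proof. replace (2*c) with (c * / (1 - /2)) by field.
apply (is_series_scal_l c (fun n => (/2)^n)). apply is_series_geom. rewrite Rabs_pos_eq; lra. Qed.

Lemma geo_ex c : ex_series (fun n => c * (/2)^n).
Proof. exists (2*c). apply geo_is. Qed.

Lemma geo_ser c : Series (fun n => c * (/2)^n) = 2*c.
Proof. apply is_series_unique. apply geo_is. Qed.

Lemma h_pos n : 0 < (/2)^n.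
Proof. apply pow_lt. lra. Qed.

Lemma h_le1 n : (/2)^n <= 1.
Proof. induction n; simpl; [lra|]. pose proof (h_pos n). nra. Qed.

Lemma h_dec a b : (b <= a)%nat -> (/2)^a <= (/2)^b.
Proof. intros H. replace a with (b + (a-b))%nat by lia. rewrite pow_add.
  pose proof (h_pos b). pose proof (h_le1 (a-b)). pose proof (h_pos (a-b)). nra. Qed.

Lemma n1 j : (S j <= 2^j)%nat.
Proof. induction j; simpl; lia. Qed.

Lemma n2 j : (2*j <= 2^j)%nat.
Proof. destruct j; simpl; [lia|]. pose proof (n1 j). lia. Qed.

Lemma n3 mu j : (2^mu + j <= 2^(mu+j))%nat.
Proof. rewrite Nat.pow_add_r. pose proof (n1 j). pose proof (n1 mu). nia. Qed.

Lemma lam_h k i : lam k i = (/2)^(Fk k i).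
Proof. unfold lam. rewrite pow_inv. auto. Qed.

Lemma lam_pos k i : 0 < lam k i.
Proof. rewrite lam_h. apply h_pos. Qed.

Lemma lam_geom k mu j : lam k (mu + j) <= lam k mu * (/2)^j.
Proof. rewrite !lam_h, <- pow_add. apply h_dec. unfold Fk. pose proof (n3 mu j). lia. Qed.

Lemma lam_quart k m n : (m <= n)%nat -> lam k n <= (/2)^m * (/2)^m.
Proof. intros H. rewrite lam_h, <- pow_add. apply h_dec. unfold Fk.
  pose proof (n2 m). pose proof (Nat.pow_le_mono_r 2 m n ltac:(lia) H). lia. Qed.

Lemma lam_half k i : lam k i <= ((/2)^k * /2) * (/2)^i.
Proof. rewrite lam_h. replace ((/2)^k * /2) with ((/2)^(S k)) by (simpl; ring).
  rewrite <- pow_add. apply h_dec. unfold Fk. pose proof (n1 i). lia. Qed.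

Lemma lam_dec k i j : (i <= j)%nat -> lam k j <= lam k i.
Proof. intros H. rewrite !lam_h. apply h_dec. unfold Fk.
  pose proof (Nat.pow_le_mono_r 2 i j ltac:(lia) H). lia. Qed.

Lemma lam_ex k : ex_series (lam k).
Proof. apply (ser_cmp _ (fun i => ((/2)^k * /2) * (/2)^i)); [|apply geo_ex].
  intros n; split; [left; apply lam_pos| apply lam_half]. Qed.

Lemma lam_ser k : Series (lam k) <= (/2)^k.
Proof. eapply Rle_trans. apply (Series_le _ (fun i => ((/2)^k * /2) * (/2)^i)); [|apply geo_ex].
  intros n; split; [left; apply lam_pos| apply lam_half]. rewrite geo_ser. lra. Qed.

Lemma ex_min (P : nat -> Prop) : (exists n, P n) -> exists n, P n /\ forall j, P j -> (n <= j)%nat.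
Proof. intros [n Hn]. revert Hn. induction n as [n IH] using (well_founded_induction Wf_nat.lt_wf).
  intros Hn. destruct (classic (exists j, P j /\ (j < n)%nat)) as [[j [Pj Hj]]|N].
  - apply (IH j Hj Pj).
  - exists n; split; auto. intros j Pj. destruct (Compare_dec.le_lt_dec n j); auto. exfalso; apply N; eauto. Qed.

Lemma is_rat_nat m : is_rat (INR m).
Proof. exists (inject_Z (Z.of_nat m)). unfold Q2R; simpl. rewrite INR_IZR_INZ. field. Qed.

Definition tm (Qe : nat -> R) k m (t : R) i : R :=
  if excluded_middle_informative (J m t (Qe i)) then lam k i else 0.

Lemma Lm_eq {Om : Type} Qe k m (r : Om -> Om -> R) a b :
  Lambda_m Qe k m r a b = Series (tm Qe k m (r a b)).
Proof. reflexivity. Qed.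

Lemma tm_bnd Qe k m t i : 0 <= tm Qe k m t i <= lam k i.
Proof. unfold tm. destruct excluded_middle_informative; pose proof (lam_pos k i); lra. Qed.

Lemma tm_ex Qe k m t : ex_series (tm Qe k m t).
Proof. apply (ser_cmp _ (lam k)); [apply tm_bnd|apply lam_ex]. Qed.

Lemma tm_nonneg Qe k m t : 0 <= Series (tm Qe k m t).
Proof. apply ser_nonneg; [apply tm_ex|intros; apply tm_bnd]. Qed.


Lemma Lm_diag {Om : Type} (S : R -> Prop) Qe k m (r : Om -> Om -> R) a :
  semi_metric (fun t => S t /\ INR m < t < INR m + 1) r ->
  Lambda_m Qe k m r a a = 0.
Proof. intros [H0 [Hs [Hz Ht]]]. rewrite Lm_eq. rewrite (proj2 (Hz a a) eq_refl).
  transitivity (Series (fun _ => 0)); [|apply ser_zero]. apply Series_ext. intros i. unfold tm.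
  destruct excluded_middle_informative as [[_ Hj]|]; auto. pose proof (pos_INR m). lra. Qed.

Lemma r_lt {Om : Type} (S : R -> Prop) m (r : Om -> Om -> R) a b :
  semi_metric (fun t => S t /\ INR m < t < INR m + 1) r -> r a b < INR m + 1.
Proof. intros [H0 [Hs [Hz Ht]]]. destruct (classic (a = b)) as [E|N]; [subst b|].
  - rewrite (proj2 (Hz a a) eq_refl). pose proof (pos_INR m). lra.
  - apply Ht in N. lra. Qed.

Lemma Lm_lower {Om : Type} (S : R -> Prop) Qe k m (r : Om -> Om -> R) mu a b :
  semi_metric (fun t => S t /\ INR m < t < INR m + 1) r ->
  Qe mu = INR m -> a <> b -> lam k mu <= Lambda_m Qe k m r a b.
Proof. intros Hsm HQ N. destruct Hsm as [H0 [Hs [Hz Ht]]]. pose proof (Ht _ _ N) as Hr.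
  rewrite Lm_eq. replace (lam k mu) with (tm Qe k m (r a b) mu).
  - apply ser_term; [apply tm_ex|intros; apply tm_bnd].
  - unfold tm. destruct excluded_middle_informative as [|n]; auto. exfalso; apply n.
    rewrite HQ. split; [apply is_rat_nat|lra]. Qed.

Lemma Lm_upper {Om : Type} (S : R -> Prop) Qe k m (r : Om -> Om -> R) mu a b :
  semi_metric (fun t => S t /\ INR m < t < INR m + 1) r ->
  is_mu Qe m mu -> Lambda_m Qe k m r a b <= 2 * lam k mu.
Proof. intros Hsm [_ Hmin]. pose proof (r_lt S m r a b Hsm) as Hr. rewrite Lm_eq.
  rewrite (Series_incr_n_aux _ mu).
  - eapply Rle_trans. apply (Series_le _ (fun j => lam k mu * (/2)^j)).
    + intros j. split; [apply tm_bnd|]. eapply Rle_trans; [apply tm_bnd|apply lam_geom].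
    + apply geo_ex.
    + rewrite geo_ser. lra.
  - intros i Hi. unfold tm. destruct excluded_middle_informative as [[_ Hj]|]; auto.
    exfalso. assert (mu <= i)%nat by (apply Hmin; lra). lia. Qed.

Ltac dsplit := repeat match goal with |- context [Rle_dec ?a ?b] => destruct (Rle_dec a b) | |- context[Rlt_dec ?a ?b] => destruct (Rlt_dec a b) end.

Definition dd (Qe : nat -> R) k m i : R :=
  if Rle_dec (INR m) (Qe i) then if Rlt_dec (Qe i) (INR m + 1) then lam k i else 0 else 0.

Lemma dd_bnd Qe k m i : 0 <= dd Qe k m i <= lam k i.
Proof. unfold dd. pose proof (lam_pos k i). destruct Rle_dec; [destruct Rlt_dec|]; lra. Qed.

Lemma dd_sum Qe k i N : 0 <= Qe i ->
  sum_f_R0 (fun m => dd Qe k m i) N = if Rlt_dec (Qe i) (INR (S N)) then lam k i else 0.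
Proof. intros H. induction N.
  - simpl. unfold dd. simpl. dsplit; lra.
  - simpl sum_f_R0. rewrite IHN. unfold dd. rewrite !S_INR.
    dsplit; lra. Qed.

Lemma dd_sbnd Qe k i N : 0 <= Qe i -> 0 <= sum_f_R0 (fun m => dd Qe k m i) N <= lam k i.
Proof. intros H. rewrite dd_sum; auto. pose proof (lam_pos k i). destruct Rlt_dec; lra. Qed.

Lemma dd_ex Qe k m : ex_series (dd Qe k m).
Proof. apply (ser_cmp _ (lam k)); [apply dd_bnd|apply lam_ex]. Qed.

Lemma dd_swap Qe k N : (forall i, 0 <= Qe i) ->
  sum_f_R0 (fun m => Series (dd Qe k m)) N = Series (fun i => sum_f_R0 (fun m => dd Qe k m i) N).
Proof. intros H. induction N.
  - reflexivity.
  - simpl sum_f_R0. rewrite IHN. rewrite <- Series_plus; auto.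
    + apply (ser_cmp _ (lam k)); [intros; apply dd_sbnd; auto|apply lam_ex].
    + apply dd_ex. Qed.

Lemma diam {Om : Type} (S : R -> Prop) Qe k (Rs : nat -> Om -> Om -> R) x y :
  (forall i, 0 <= Qe i) ->
  (forall m, semi_metric (fun t => S t /\ INR m < t < INR m + 1) (Rs m)) ->
  ex_series (fun m => Lambda_m Qe k m (Rs m) (x m) (y m)) ->
  Lambda Qe k Rs x y <= (/2)^k.
Proof. intros HQ Hsm Hex. unfold Lambda. apply ser_bound; auto. intros N.
  eapply Rle_trans. apply (sum_Rle _ (fun m => Series (dd Qe k m))).
  - intros m _. rewrite Lm_eq. apply Series_le; [|apply dd_ex]. intros i. split; [apply tm_bnd|].
    pose proof (r_lt S m (Rs m) (x m) (y m) (Hsm m)).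
    unfold tm, dd. destruct excluded_middle_informative as [[_ Hj]|]; [|apply dd_bnd].
    destruct Rle_dec; [destruct Rlt_dec|]; lra.
  - rewrite dd_swap; auto. eapply Rle_trans; [|apply lam_ser]. apply Series_le; [|apply lam_ex].
    intros; apply dd_sbnd; auto. Qed.

Fixpoint nmax (f : nat -> nat) M := match M with O => O | S M' => Nat.max (f M') (nmax f M') end.

Lemma nmax_ge f m M : (m < M)%nat -> (f m <= nmax f M)%nat.
Proof. induction M; intros H; simpl; [lia|]. destruct (Nat.eq_dec m M); [subst; lia|].
  specialize (IHM ltac:(lia)). lia. Qed.

Theorem proposition4p13 (Om : Type) (Qe : nat -> R) (k : nat)
  (S : R -> Prop) (Rs : nat -> Om -> Om -> R) :
  card_continuum Om ->
  rat_enum Qe -> property_M Qe ->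
  ubiq_dense S -> gauge_system S Rs ->
  in_Met (Lambda Qe k Rs) /\
  (forall x y, Lambda Qe k Rs x y <= 2 * / 2 ^ (Fk k 0)) /\
  complete_metric (Lambda Qe k Rs).
Proof.
  intros _ [Hinj Hchar] [HM1 HM2] _ [_ Hsys].
  assert (HQ : forall i, 0 <= Qe i).
  { intros i. destruct (proj2 (Hchar (Qe i)) (ex_intro _ i eq_refl)); auto. }
  assert (Hsm : forall m, semi_metric (fun t => S t /\ INR m < t < INR m + 1) (Rs m)).
  { intros m; apply Hsys. }
  assert (Hex : forall m, exists i, is_mu Qe m i).
  { intros m. destruct (ex_min (fun i => INR m <= Qe i < INR m + 1)) as [i Hi].
    - destruct (proj1 (Hchar (INR m)) (conj (is_rat_nat m) (pos_INR m))) as [j Hj].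
      exists j. rewrite Hj. lra.
    - exists i; exact Hi. }
  set (mu := fun m => proj1_sig (constructive_indefinite_description _ (Hex m))).
  assert (Hmu : forall m, is_mu Qe m (mu m)).
  { intros m. exact (proj2_sig (constructive_indefinite_description _ (Hex m))). }
  clearbody mu.
  assert (HQmu : forall m, Qe (mu m) = INR m) by (intros; apply HM1; auto).
  assert (Hinc : forall m, (mu m < mu (Datatypes.S m))%nat) by (intros m; apply (HM2 m); auto).
  assert (Hmono : forall m n, (m <= n)%nat -> (mu m <= mu n)%nat).
  { intros m n H. induction H; auto. specialize (Hinc m0). lia. }
  assert (Hge : forall m, (m <= mu m)%nat).
  { induction m; [lia|]. specialize (Hinc m). lia. }
  assert (Tnn : forall m a b, 0 <= Lambda_m Qe k m (Rs m) a b).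
  { intros. rewrite Lm_eq. apply tm_nonneg. }
  assert (Tup : forall m a b, Lambda_m Qe k m (Rs m) a b <= 2 * ((/2)^m * (/2)^m)).
  { intros. eapply Rle_trans. apply (Lm_upper S Qe k m (Rs m) (mu m)); auto.
    pose proof (lam_quart k m (mu m) (Hge m)). lra. }
  assert (Tdiag : forall m a, Lambda_m Qe k m (Rs m) a a = 0).
  { intros. apply (Lm_diag S). auto. }
  assert (Tlow : forall m a b, a <> b -> lam k (mu m) <= Lambda_m Qe k m (Rs m) a b).
  { intros. apply (Lm_lower S); auto. }
  assert (Tsym : forall m a b, Lambda_m Qe k m (Rs m) a b = Lambda_m Qe k m (Rs m) b a).
  { intros. rewrite !Lm_eq. destruct (Hsm m) as [_ [Hs _]]. rewrite Hs. auto. }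
  assert (Ttri : forall m a b c, Lambda_m Qe k m (Rs m) a c <=
     Lambda_m Qe k m (Rs m) a b + Lambda_m Qe k m (Rs m) b c).
  { intros m a b c.
    pose proof (Tnn m a b). pose proof (Tnn m b c). pose proof (Tnn m a c).
    destruct (classic (a = b)) as [E|N1]; [subst b; rewrite Tdiag; lra|].
    destruct (classic (b = c)) as [E|N2]; [subst c; rewrite (Tdiag m b); lra|].
    destruct (classic (a = c)) as [E|N3]; [subst c; rewrite Tdiag; lra|].
    pose proof (Lm_upper S Qe k m (Rs m) (mu m) a c (Hsm m) (Hmu m)).
    pose proof (Tlow m a b N1). pose proof (Tlow m b c N2). lra. }
  assert (Lex : forall x y : nat -> Om, ex_series (fun m => Lambda_m Qe k m (Rs m) (x m) (y m))).
  { intros. apply (ser_cmp _ (fun m => 2 * (/2)^m)); [|apply geo_ex].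
    intros m. split; auto. eapply Rle_trans; [apply Tup|].
    pose proof (h_le1 m). pose proof (h_pos m). nra. }
  assert (Lnn : forall x y, 0 <= Lambda Qe k Rs x y).
  { intros. apply ser_nonneg; auto. }
  assert (Llow : forall x y m, x m <> y m -> lam k (mu m) <= Lambda Qe k Rs x y).
  { intros x y m H. eapply Rle_trans; [apply (Tlow m _ _ H)|].
    apply (ser_term (fun m => Lambda_m Qe k m (Rs m) (x m) (y m))); auto. }
  assert (Ltail : forall x y M, (forall m, (m < M)%nat -> x m = y m) ->
     Lambda Qe k Rs x y <= 4 * (/2)^M).
  { intros x y M H. unfold Lambda. eapply Rle_trans.
    apply (Series_le _ (fun m => (2 * (/2)^M) * (/2)^m)); [|apply geo_ex].
    - intros m. split; auto. destruct (Compare_dec.lt_dec m M) as [h|h].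
      + rewrite (H m h), Tdiag. pose proof (h_pos M). pose proof (h_pos m). nra.
      + eapply Rle_trans; [apply Tup|]. pose proof (h_dec m M ltac:(lia)).
        pose proof (h_pos m). nra.
    - rewrite geo_ser. lra. }
  assert (Lsmall : forall eps, 0 < eps -> exists M, 4 * (/2)^M < eps).
  { intros eps He. destruct (pow_lt_1_zero (/2)) with (y := eps / 4) as [M HM].
    - rewrite Rabs_pos_eq; lra.
    - lra.
    - exists M. specialize (HM M (le_n _)). rewrite Rabs_pos_eq in HM; [lra|].
      left; apply h_pos. }
  split; [split; [split; [|split; [|split]]|]|split].
  - exact Lnn.
  - intros x y. split.
    + intros H. apply functional_extensionality. intros m.
      destruct (classic (x m = y m)) as [E|N]; auto. exfalso.
      pose proof (Llow x y m N). pose proof (lam_pos k (mu m)). lra.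
    + intros <-. unfold Lambda. transitivity (Series (fun _ => 0)); [|apply ser_zero].
      apply Series_ext. intros; apply Tdiag.
  - intros x y. unfold Lambda. apply Series_ext. intros; apply Tsym.
  - intros x y z. unfold Lambda. rewrite <- Series_plus; auto.
    apply Series_le. intros m; split; auto.
    apply (ex_series_plus (fun m => Lambda_m Qe k m (Rs m) (x m) (y m))
      (fun m => Lambda_m Qe k m (Rs m) (y m) (z m))); auto.
  - intros U. split.
    + intros HU x Ux. destruct (HU x Ux) as [F [V [HV HUV]]].
      exists (lam k (mu (list_max F))). split; [apply lam_pos|].
      intros y Hy. apply HUV. intros i Hi.
      assert (E : x i = y i).
      { destruct (classic (x i = y i)) as [E|N]; auto. exfalso.
        assert (Hle : (i <= list_max F)%nat).
        { pose proof (proj1 (list_max_le F (list_max F)) (le_n _)) as Hf.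
          rewrite Forall_forall in Hf. auto. }
        pose proof (lam_dec k _ _ (Hmono _ _ Hle)). pose proof (Llow x y i N). lra. }
      rewrite <- E. auto.
    + intros HU x Ux. destruct (HU x Ux) as [eps [He Hb]].
      destruct (Lsmall eps He) as [M HM].
      exists (seq 0 M), (fun i o => o = x i). split; [auto|].
      intros y Hy. apply Hb. eapply Rle_lt_trans; [|exact HM]. apply Ltail.
      intros m Hm. symmetry. apply Hy. apply in_seq. lia.
  - intros x y. eapply Rle_trans. apply (diam S); auto.
    unfold Fk. simpl. rewrite pow_inv. pose proof (pow_lt 2 k ltac:(lra)). right; field; lra.
  - intros u Hc.
    assert (HN : forall m, exists N, forall n, (N <= n)%nat -> u n m = u N m).
    { intros m. destruct (Hc (lam k (mu m)) (lam_pos _ _)) as [N HN]. exists N.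
      intros n Hn. destruct (classic (u n m = u N m)) as [E|NE]; auto. exfalso.
      specialize (HN n N Hn (le_n _)). pose proof (Llow (u n) (u N) m NE). lra. }
    set (Nf := fun m => proj1_sig (constructive_indefinite_description _ (HN m))).
    assert (HNf : forall m n, (Nf m <= n)%nat -> u n m = u (Nf m) m).
    { intros m. exact (proj2_sig (constructive_indefinite_description _ (HN m))). }
    clearbody Nf.
    exists (fun m => u (Nf m) m). intros eps He. destruct (Lsmall eps He) as [M HM].
    exists (nmax Nf M). intros n Hn. eapply Rle_lt_trans; [|exact HM]. apply Ltail.
    intros m Hm. apply HNf. pose proof (nmax_ge Nf m M Hm). lia.
Qed.
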